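(* In the Gödel setting described in the context, let $(A,B,R)$ be a $\top$-normalized fuzzy context and $(g,f)\in\mathcal{F}_N$ such that for every $a\in A$ there exists $b\in B$ with $g(b)>R(a,b)$. Then $g^{\uparrow}(a)\le g^{\uparrow_\pi}(a)$ for all $a\in A$.
   Context: Gödel setting: all truth-value sets are $[0,1]$ with the usual order, $x\&y=\min\{x,y\}$, and $z\swarrow y=z\nwarrow y$ equals $1$ if $y\le z$ and $z$ otherwise. A fuzzy context is $(A,B,R)$ with nonempty finite sets $A,B$ and $R\colon A\times B\to[0,1]$. For $g\colon B\to[0,1]$, $f\colon A\to[0,1]$: $g^{\uparrow}(a)=\inf_{b\in B}(R(a,b)\swarrow g(b))$, $f^{\downarrow}(b)=\inf_{a\in A}(R(a,b)\nwarrow f(a))$, $g^{\uparrow_N}(a)=\inf_{b\in B}(g(b)\swarrow R(a,b))$, $f^{\downarrow^N}(b)=\inf_{a\in A}(f(a)\nwarrow R(a,b))$, $g^{\uparrow_\pi}(a)=\sup_{b\in B}\min\{R(a,b),g(b)\}$. $\mathcal{F}_N=\{(g,f)\mid g^{\uparrow_N}=f,\ f^{\downarrow^N}=g\}$. The context is normalized if no row $R(a,\cdot)$ and no column $R(\cdot,b)$ is identically $0$, and no row and no column has all values different from $0$; it is $\top$-normalized if moreover for every $a\in A$ there is $b_a\in B$ with $R(a,b_a)=1$. *)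

(* Defs.v *)
From mathcomp Require Import all_boot all_order all_algebra.
From mathcomp Require Import reals.
Set Implicit Arguments. Unset Strict Implicit. Unset Printing Implicit Defensive.
Import Order.TTheory GRing.Theory Num.Theory.
Local Open Scope ring_scope.

Section Goedel.
Variable R : realType.

(* Goedel residuum: z ↙ y = z ↖ y = 1 if y <= z, z otherwise *)
Definition gres (z y : R) : R := if y <= z then 1 else z.

Definition in01 (x : R) : Prop := 0 <= x <= 1.

(* infimum / supremum over a nonempty finite set of values in [0,1]:
   since all values lie in [0,1], folding min with 1 (resp. max with 0)
   gives exactly the inf (resp. sup). *)
Definition inf01 (T : finType) (F : T -> R) : R := \big[Order.min/1]_(t : T) F t.
Definition sup01 (T : finType) (F : T -> R) : R := \big[Order.max/0]_(t : T) F t.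

Variables (A B : finType) (I : A -> B -> R).

Definition up (g : B -> R) (a : A) : R := inf01 (fun b => gres (I a b) (g b)).
Definition down (f : A -> R) (b : B) : R := inf01 (fun a => gres (I a b) (f a)).
Definition upN (g : B -> R) (a : A) : R := inf01 (fun b => gres (g b) (I a b)).
Definition downN (f : A -> R) (b : B) : R := inf01 (fun a => gres (f a) (I a b)).
Definition upPi (g : B -> R) (a : A) : R := sup01 (fun b => Order.min (I a b) (g b)).

Definition inFN (g : B -> R) (f : A -> R) : Prop :=
  (forall a, upN g a = f a) /\ (forall b, downN f b = g b).

Definition fuzzy_context : Prop :=
  (exists a : A, True) /\ (exists b : B, True) /\ (forall a b, in01 (I a b)).

Definition normalized : Prop :=
  fuzzy_context /\
  (forall a, exists b, I a b != 0) /\ (forall b, exists a, I a b != 0) /\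
  (forall a, exists b, I a b = 0) /\ (forall b, exists a, I a b = 0).

Definition top_normalized : Prop :=
  normalized /\ forall a, exists b, I a b = 1.
End Goedel.

(* Main.v *)
Require Import Defs.
From mathcomp Require Import all_boot all_order all_algebra.
From mathcomp Require Import reals.
Import Order.TTheory GRing.Theory Num.Theory.
Local Open Scope ring_scope.

Theorem mainTheorem13 (R : realType) (A B : finType) (I : A -> B -> R)
    (g : B -> R) (f : A -> R) :
  top_normalized I ->
  (forall b, in01 (g b)) -> (forall a, in01 (f a)) ->
  inFN I g f ->
  (forall a, exists b, g b > I a b) ->
  forall a, up I g a <= upPi I g a.
Proof.
move=> _ _ _ _ H a.
have [b Hb] := H a.
apply: (@le_trans _ _ (I a b)).
  rewrite /up /inf01 (bigD1 b) //= /gres.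
  have -> : (g b <= I a b) = false by rewrite leNgt Hb.
  by rewrite ge_min lexx.
rewrite /upPi /sup01 (bigD1 b) //=.
have -> : Order.min (I a b) (g b) = I a b by rewrite (min_idPl (ltW Hb)).
by rewrite le_max lexx.
Qed.
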